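(* Let $H=(V,E,C,\ell)$ be an edge-colored graph with $k$ colors, $x$ a feasible solution of the \textsc{MinECC} LP relaxation, $e=\{u,v\}\in E$ an edge with color $c=\ell(e)$ and $x_e=\max\{x_u^c,x_v^c\}$, and let $z_0\le z_1\le\dots\le z_{k-1}$ be the color thresholds of $e$. Then for every integer $t$ with $1\le t\le\frac k2$, $$t\le x_e+z_t+z_{t+1}+\cdots+z_{2t-1}.$$
   Context: The \textsc{MinECC} LP relaxation for an edge-colored hypergraph $H=(V,E,C,\ell)$ with colors $C=[k]$ has constraints $\sum_{i=1}^k x_v^i=k-1$ for all $v\in V$; $x_e\ge x_w^{\ell(e)}$ for all $e\in E$, $w\in e$; $0\le x_w^i\le 1$; $0\le x_e\le 1$. An edge-colored graph is one in which every edge has exactly two nodes. Color thresholds of an edge $e$ with color $c$: for $j\in C\setminus\{c\}$ let $m_j=\min_{w\in e}x_w^j$, and let $m_{(1)}\le m_{(2)}\le\dots\le m_{(k-1)}$ be these $k-1$ values sorted in nondecreasing order. Set $z_0=0$ and $z_i=m_{(i)}$ for $1\le i\le k-1$. Equivalently, $z_i$ is the smallest nonnegative value such that for every $\rho>z_i$ there are at least $i$ distinct colors $j\ne c$ for which some $w\in e$ has $x_w^j<\rho$. *)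

(* Defs.v *)
From HB Require Import structures.
From mathcomp Require Import all_boot all_order all_algebra.
Set Implicit Arguments. Unset Strict Implicit. Unset Printing Implicit Defensive.
Import Order.TTheory GRing.Theory Num.Theory.
Local Open Scope ring_scope.

Record ec_hypergraph (k : nat) := ECHypergraph {
  hV : finType;
  hE : finType;
  nodes : hE -> {set hV};
  ell : hE -> 'I_k }.

Definition is_ec_graph k (H : ec_hypergraph k) : Prop :=
  forall e : hE H, #|nodes e| = 2%N.

Definition minecc_lp_feasible (R : realFieldType) k (H : ec_hypergraph k)
    (xv : hV H -> 'I_k -> R) (xe : hE H -> R) : Prop :=
  [/\ forall v : hV H, \sum_(i < k) xv v i = (k.-1)%:R,
      forall (e : hE H) (w : hV H), w \in nodes e -> xv w (ell e) <= xe e,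
      forall v i, 0 <= xv v i /\ xv v i <= 1
    & forall e, 0 <= xe e /\ xe e <= 1].

(* Color thresholds of an edge of a graph with endpoints u, v and color c:
   m_j = min_{w in e} x_w^j = min (x_u^j, x_v^j) for j <> c, sorted
   nondecreasingly as m_(1) <= ... <= m_(k-1); z_0 = 0, z_i = m_(i). *)
Definition sorted_mins (R : realFieldType) (V : Type) k
    (xv : V -> 'I_k -> R) (u v : V) (c : 'I_k) : seq R :=
  sort <=%R [seq Num.min (xv u j) (xv v j) | j <- enum 'I_k & j != c].

Definition color_threshold (R : realFieldType) (V : Type) k
    (xv : V -> 'I_k -> R) (u v : V) (c : 'I_k) (i : nat) : R :=
  if i is i'.+1 then nth 0 (sorted_mins xv u v c) i' else 0.

(* Main.v *)
Require Import Defs.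
From HB Require Import structures.
From mathcomp Require Import all_boot all_order all_algebra.
From mathcomp Require Import ring lra zify.
Import Order.TTheory GRing.Theory Num.Theory.
Local Open Scope ring_scope.

Lemma key (R : realFieldType) (n q : nat) (D w : nat -> R) :
 (0 < q)%N -> (q <= n)%N ->
 (forall i j, (i <= j)%N -> (j < n)%N -> D j <= D i) ->
 (forall i, 0 <= D i) ->
 (forall i, 0 <= w i <= 1) ->
 q%:R <= \sum_(0 <= i < n) w i ->
 \sum_(n-q <= i < n) D i <= \sum_(0 <= i < n) w i * D i.
Proof.
move=> q0 qn Dm D0 w01 Hq.
set p := (n - q)%N.
have pn : (p <= n)%N by rewrite /p leq_subr.
set m := D p.
have Hlo : \sum_(0 <= i < p) w i * m <= \sum_(0 <= i < p) w i * D i.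
  rewrite big_nat [X in _ <= X]big_nat; apply: ler_sum => i /andP[_ ip].
  have /andP[w0 _] := w01 i.
  apply: ler_wpM2l => //; apply: Dm; [exact: ltnW | by rewrite /p; lia].
have Hhi : \sum_(p <= i < n) (1 - w i) * D i <= \sum_(p <= i < n) (1 - w i) * m.
  rewrite big_nat [X in _ <= X]big_nat; apply: ler_sum => i /andP[pi iN].
  have /andP[_ w1] := w01 i.
  apply: ler_wpM2l; first by rewrite subr_ge0.
  exact: Dm.
rewrite (big_cat_nat (n:=p)) // in Hq; rewrite [X in _ <= X](big_cat_nat (n:=p)) //=.
have E1 : \sum_(p <= i < n) D i = \sum_(p <= i < n) (1 - w i) * D i + \sum_(p <= i < n) w i * D i.
  rewrite -big_split /=; apply: eq_bigr => i _; ring.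
have E2 : \sum_(p <= i < n) (1 - w i) * m = q%:R * m - (\sum_(p <= i < n) w i) * m.
  rewrite -mulr_suml sumrB sumr_const_nat /p subKn // mulrBl; congr (_ - _).
rewrite -mulr_suml in Hlo.
rewrite E1; rewrite E2 in Hhi.
have m0 : 0 <= m := D0 p.
set a := \sum_(0 <= i < p) w i in Hq Hlo.
set b := \sum_(p <= i < n) w i in Hq Hhi.
set c := \sum_(0 <= i < p) w i * D i in Hlo *.
have : 0 <= (a + b - q%:R) * m by apply: mulr_ge0 => //; rewrite subr_ge0.
nra.
Qed.

Lemma sum_extend (R : realFieldType) (n N : nat) (F : nat -> R) :
  (n <= N)%N -> (forall i, 0 <= F i) ->
  \sum_(0 <= i < n) F i <= \sum_(0 <= i < N) F i.
Proof.
move=> nN F0; rewrite [X in _ <= X](big_cat_nat (n:=n)) //= lerDl; apply: sumr_ge0 => i _; exact: F0.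
Qed.

Theorem lemma3 (R : realFieldType) (k : nat) (H : ec_hypergraph k)
    (xv : hV H -> 'I_k -> R) (xe : hE H -> R)
    (e : hE H) (u v : hV H) (t : nat) :
  is_ec_graph H ->
  minecc_lp_feasible xv xe ->
  nodes e = [set u; v] ->
  xe e = Num.max (xv u (ell e)) (xv v (ell e)) ->
  (1 <= t)%N -> (t.*2 <= k)%N ->
  t%:R <= xe e + \sum_(t <= i < t.*2) color_threshold xv u v (ell e) i.
Proof.
move=> _ [Hsum Hedge Hv01 _] Hnodes _ t1 t2k.
set c := ell e.
have hu : xv u c <= xe e by apply: Hedge; rewrite Hnodes !inE eqxx.
have hv : xv v c <= xe e by apply: Hedge; rewrite Hnodes !inE eqxx orbT.
pose g := fun p : R * R => Num.min p.1 p.2.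
pose leQ := fun p q : R * R => g p <= g q.
pose S := [seq (xv u j, xv v j) | j <- enum 'I_k & j != c].
pose L := sort leQ S.
have HsL : sorted_mins xv u v c = map g L.
  rewrite /L (map_sort (leT:=<=%R)) //.
  by rewrite /sorted_mins /S -map_comp.
have sizeL : size L = k.-1.
  rewrite size_sort size_map size_filter -sum1_count big_enum_cond /= sum1_card.
  by rewrite cardC1 card_ord.
have pS : perm_eq L S by rewrite perm_sort perm_refl.
have sumX : forall (y : hV H), \sum_(j < k | j != c) (1 - xv y j) = xv y c.
  move=> y; have := Hsum y; rewrite (bigD1 c) //= => Hs.
  rewrite sumrB sumr_const cardC1 card_ord; lra.
have sumu : \sum_(p <- L) (1 - p.1) = xv u c.
  rewrite (perm_big S) // big_map big_filter big_enum_cond /=.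
  exact: sumX.
have sumv : \sum_(p <- L) (1 - p.2) = xv v c.
  rewrite (perm_big S) // big_map big_filter big_enum_cond /=.
  exact: sumX.
pose P i := nth (0, 0) L i.
have Pb : forall i, (P i).1 <= 1 /\ (P i).2 <= 1.
  move=> i; case: (ltnP i (size L)) => hi; last first.
    by rewrite /P nth_default //= ler01.
  have := mem_nth (0, 0) hi; rewrite (perm_mem pS) /P => /mapP [j _ ->] /=.
  by split; [exact: (proj2 (Hv01 u j)) | exact: (proj2 (Hv01 v j))].
pose D i := 1 - g (P i).
have ss : sorted <=%R (map g L) by rewrite -HsL; apply: sort_sorted; exact: le_total.
have Dmon : forall i j, (i <= j)%N -> (j < size L)%N -> D j <= D i.
  move=> i j ij jn.
  have := sorted_leq_nth le_trans lexx 0 ss i j.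
  rewrite !inE size_map => Hm.
  have {}Hm := Hm (leq_ltn_trans ij jn) jn ij.
  rewrite !(nth_map (0, 0)) in Hm; [|exact: jn|exact: leq_ltn_trans ij jn].
  rewrite /D /P; lra.
have D0 : forall i, 0 <= D i.
  move=> i; have [h1 h2] := Pb i; rewrite /D /g minEle subr_ge0; by case: ifP.
pose wb i := (P i).1 <= (P i).2.
have HDu : forall i, (wb i)%:R * D i = (wb i)%:R * (1 - (P i).1).
  by move=> i; rewrite /D /g minEle /wb; case: ifP => _; rewrite ?mul1r ?mul0r.
have HDv : forall i, (~~ wb i)%:R * D i = (~~ wb i)%:R * (1 - (P i).2).
  by move=> i; rewrite /D /g minEle /wb; case: ifP => _; rewrite ?mul1r ?mul0r.
case: t t1 t2k => [//|t'] _ t2k.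
set n := t'.*2.+1.
have nL : (n <= size L)%N by rewrite sizeL /n; rewrite doubleS in t2k; lia.
have nq : (n - t'.+1 = t')%N by rewrite /n -addnn; lia.
rewrite big_add1 doubleS /=.
have -> : \sum_(t' <= i < t'.*2.+1) color_threshold xv u v c i.+1
          = \sum_(t' <= i < n) (1 - D i).
  rewrite big_nat [RHS]big_nat; apply: eq_bigr => i /andP[_ hi] /=.
  rewrite HsL (nth_map (0, 0)); last exact: leq_trans hi nL.
  by rewrite /D /P opprB addrC subrK.
rewrite sumrB sumr_const_nat.
have -> : (n - t')%N = t'.+1 by rewrite /n -addnn; lia.
suff : \sum_(t' <= i < n) D i <= xe e by lra.
have Nsum : (\sum_(0 <= i < n) (wb i : nat) + \sum_(0 <= i < n) (~~ wb i : nat) = n)%N.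
  rewrite -big_split /= (eq_bigr (fun _ => 1%N)); last by move=> i _; case: (wb i).
  by rewrite sum_nat_const_nat muln1 subn0.
have w01 : forall b : bool, 0 <= (b%:R : R) <= 1 by case; rewrite /= ?lexx ?ler01.
have qn : (t'.+1 <= n)%N by rewrite /n -addnn; lia.
have Dm : forall i j, (i <= j)%N -> (j < n)%N -> D j <= D i.
  by move=> i j ij jn; apply: Dmon ij (leq_trans jn nL).
have [hw|hw] : (t'.+1 <= \sum_(0 <= i < n) (wb i : nat))%N \/
               (t'.+1 <= \sum_(0 <= i < n) (~~ wb i : nat))%N.
  have Nd : n = (t' + t').+1 by rewrite /n addnn.
  lia.
- have K := @key R n t'.+1 D (fun i => (wb i)%:R) (ltn0Sn t') qn Dm D0 (fun i => w01 _).
  rewrite nq in K.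
  apply: le_trans (K _) _; first by rewrite -natr_sum ler_nat.
  rewrite (eq_bigr _ (fun i _ => HDu i)).
  have Hs : \sum_(0 <= i < n) (( wb i)%:R * (1 - (P i).1)) <= \sum_(0 <= i < n) (1 - (P i).1).
    rewrite big_nat [X in _ <= X]big_nat; apply: ler_sum => i _.
    have [h1 _] := Pb i; case: (wb i); rewrite ?mul1r ?mul0r ?lexx ?subr_ge0 //.
  apply: le_trans Hs _.
  apply: le_trans (@sum_extend R n (size L) _ nL _) _.
    by move=> i; rewrite subr_ge0; exact: (Pb i).1.
  by rewrite -(big_nth (0, 0) xpredT (fun p : R * R => 1 - p.1)) sumu.
- have K := @key R n t'.+1 D (fun i => (~~ wb i)%:R) (ltn0Sn t') qn Dm D0 (fun i => w01 _).
  rewrite nq in K.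
  apply: le_trans (K _) _; first by rewrite -natr_sum ler_nat.
  rewrite (eq_bigr _ (fun i _ => HDv i)).
  have Hs : \sum_(0 <= i < n) ((~~ wb i)%:R * (1 - (P i).2)) <= \sum_(0 <= i < n) (1 - (P i).2).
    rewrite big_nat [X in _ <= X]big_nat; apply: ler_sum => i _.
    have [_ h2] := Pb i; case: (wb i); rewrite ?mul1r ?mul0r ?lexx ?subr_ge0 //.
  apply: le_trans Hs _.
  apply: le_trans (@sum_extend R n (size L) _ nL _) _.
    by move=> i; rewrite subr_ge0; exact: (Pb i).2.
  by rewrite -(big_nth (0, 0) xpredT (fun p : R * R => 1 - p.2)) sumv.
Qed.
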